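(* For every $X\in\overline\Omega_{1/6}$, $$h(\mathcal{P}_{\mathcal{S}_{n,p}}(X))\le h(X)-\Big(\frac\beta4-\frac{M_1}{2}\Big)\|X^\top X-I_p\|_F^2 .$$
   Context: $f:\mathbb{R}^{n\times p}\to\mathbb{R}$ ($n\ge p$) is differentiable with $f,\nabla f$ locally Lipschitz. $\mathcal{A}(X):=\frac32I_p-\frac12X^\top X$, $h(X):=f(X\mathcal{A}(X))+\frac\beta4\|X^\top X-I_p\|_F^2$ with $\beta>0$, $G(X):=\nabla f(Y)|_{Y=X\mathcal{A}(X)}$. $\overline\Omega_r:=\{X\in\mathbb{R}^{n\times p}:\|X^\top X-I_p\|_F\le r\}$; $\Omega:=\{X:\|X\|_2\le1+\frac1{12}\}$; $M_1:=\sup_{X\in\Omega}\|G(X)\|_F$. For $X$ of full column rank with economic SVD $X=U\Sigma V^\top$ ($U\in\mathbb{R}^{n\times p}$, $V\in\mathbb{R}^{p\times p}$ with orthonormal columns, $\Sigma$ diagonal), $\mathcal{P}_{\mathcal{S}_{n,p}}(X):=UV^\top$, the orthogonal projection onto the Stiefel manifold $\mathcal{S}_{n,p}=\{X:X^\top X=I_p\}$. *)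

(* Defs.v *)
From HB Require Import structures.
From mathcomp Require Import all_boot all_order all_algebra.
From mathcomp Require Import all_classical all_reals all_analysis.
Set Implicit Arguments. Unset Strict Implicit. Unset Printing Implicit Defensive.
Import Order.TTheory GRing.Theory Num.Theory.
Import numFieldNormedType.Exports.
Local Open Scope ring_scope.
Local Open Scope classical_set_scope.

Definition frob_inner (R : realType) (m k : nat) (A B : 'M[R]_(m, k)) : R :=
  \sum_(i < m) \sum_(j < k) A i j * B i j.
Definition frob (R : realType) (m k : nat) (A : 'M[R]_(m, k)) : R :=
  Num.sqrt (frob_inner A A).

Definition spec_norm (R : realType) (m k : nat) (X : 'M[R]_(m, k)) : R :=
  sup [set frob (X *m v) | v in [set v : 'cV[R]_k | frob v <= 1]].

Definition is_gradient (R : realType) (n p : nat)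
  (f : 'M[R]_(n, p) -> R) (grad : 'M[R]_(n, p) -> 'M[R]_(n, p)) : Prop :=
  forall Y, differentiable f Y /\ forall H, 'd f Y H = frob_inner (grad Y) H.

Definition locally_lipschitz (R : realType) (n p a b : nat)
  (g : 'M[R]_(n, p) -> 'M[R]_(a, b)) : Prop :=
  forall X, exists r : R, exists L : R, 0 < r /\
    forall Y Z, frob (Y - X) < r -> frob (Z - X) < r ->
      frob (g Y - g Z) <= L * frob (Y - Z).

Definition locally_lipschitz_fun (R : realType) (n p : nat)
  (f : 'M[R]_(n, p) -> R) : Prop :=
  forall X, exists r : R, exists L : R, 0 < r /\
    forall Y Z, frob (Y - X) < r -> frob (Z - X) < r ->
      `|f Y - f Z| <= L * frob (Y - Z).

Definition calA (R : realType) (n p : nat) (X : 'M[R]_(n, p)) : 'M[R]_p :=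
  (3 / 2 : R)%:M - (1 / 2 : R) *: (X^T *m X).

Definition hfun (R : realType) (n p : nat) (f : 'M[R]_(n, p) -> R) (beta : R)
  (X : 'M[R]_(n, p)) : R :=
  f (X *m calA X) + beta / 4 * frob (X^T *m X - 1%:M) ^+ 2.

Definition Gfun (R : realType) (n p : nat)
  (grad : 'M[R]_(n, p) -> 'M[R]_(n, p)) (X : 'M[R]_(n, p)) : 'M[R]_(n, p) :=
  grad (X *m calA X).

Definition Omega (R : realType) (n p : nat) : set 'M[R]_(n, p) :=
  [set X | spec_norm X <= 1 + 1 / 12].
Definition M1 (R : realType) (n p : nat)
  (grad : 'M[R]_(n, p) -> 'M[R]_(n, p)) : R :=
  sup [set frob (Gfun grad X) | X in @Omega R n p].

Definition Omega_bar (R : realType) (n p : nat) (r : R) : set 'M[R]_(n, p) :=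
  [set X | frob (X^T *m X - 1%:M) <= r].

Definition is_econ_svd (R : realType) (n p : nat) (X : 'M[R]_(n, p))
  (U : 'M[R]_(n, p)) (S : 'M[R]_p) (V : 'M[R]_p) : Prop :=
  [/\ X = U *m S *m V^T, U^T *m U = 1%:M, V^T *m V = 1%:M,
      (forall i j : 'I_p, i != j -> S i j = 0) & (forall i, 0 <= S i i)].

(* Main.v *)
Require Import Defs.
From HB Require Import structures.
From mathcomp Require Import all_boot all_order all_algebra.
From mathcomp Require Import all_classical all_reals all_analysis.
From mathcomp Require Import ring lra.
Import Order.TTheory GRing.Theory Num.Theory.
Import numFieldNormedType.Exports.
Local Open Scope ring_scope.
Local Open Scope classical_set_scope.

Set Implicit Arguments. Unset Strict Implicit.

Section Frob.
Variable R : realType.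
Implicit Types (m k : nat).
Lemma mul_self_ge0 (x : R) : 0 <= x * x. Proof. by rewrite -expr2 sqr_ge0. Qed.

Lemma frob_innerC m k (A B : 'M[R]_(m,k)) : frob_inner A B = frob_inner B A.
Proof. by apply: eq_bigr => i _; apply: eq_bigr => j _; rewrite mulrC. Qed.

Lemma frob_inner_ge0 m k (A : 'M[R]_(m,k)) : 0 <= frob_inner A A.
Proof. by apply: sumr_ge0 => i _; apply: sumr_ge0 => j _; exact: mul_self_ge0. Qed.

Lemma frob_ge0 m k (A : 'M[R]_(m,k)) : 0 <= frob A.
Proof. exact: sqrtr_ge0. Qed.

Lemma frob_sq m k (A : 'M[R]_(m,k)) : frob A ^+ 2 = frob_inner A A.
Proof. by rewrite /frob sqr_sqrtr // frob_inner_ge0. Qed.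

Lemma frob_innerDl m k (A B C : 'M[R]_(m,k)) :
  frob_inner (A + B) C = frob_inner A C + frob_inner B C.
Proof.
rewrite /frob_inner -big_split; apply: eq_bigr => i _.
rewrite -big_split; apply: eq_bigr => j _; by rewrite !mxE mulrDl.
Qed.

Lemma frob_innerZl m k a (A C : 'M[R]_(m,k)) :
  frob_inner (a *: A) C = a * frob_inner A C.
Proof.
rewrite /frob_inner mulr_sumr; apply: eq_bigr => i _.
rewrite mulr_sumr; apply: eq_bigr => j _; by rewrite !mxE mulrA.
Qed.

Lemma frob_innerNl m k (A C : 'M[R]_(m,k)) :
  frob_inner (- A) C = - frob_inner A C.
Proof. by rewrite -scaleN1r frob_innerZl mulN1r. Qed.

Lemma frob_innerDr m k (A B C : 'M[R]_(m,k)) :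
  frob_inner C (A + B) = frob_inner C A + frob_inner C B.
Proof. by rewrite frob_innerC frob_innerDl !(frob_innerC C). Qed.

Lemma frob_innerZr m k a (A C : 'M[R]_(m,k)) :
  frob_inner C (a *: A) = a * frob_inner C A.
Proof. by rewrite frob_innerC frob_innerZl frob_innerC. Qed.

Lemma frob_innerNr m k (A C : 'M[R]_(m,k)) :
  frob_inner C (- A) = - frob_inner C A.
Proof. by rewrite frob_innerC frob_innerNl frob_innerC. Qed.

Lemma frob_inner0l m k (C : 'M[R]_(m,k)) : frob_inner 0 C = 0.
Proof. by rewrite -(scale0r 0) frob_innerZl mul0r. Qed.

Lemma frob_inner_eq0 m k (A : 'M[R]_(m,k)) : frob_inner A A = 0 -> A = 0.
Proof.
move=> h; apply/matrixP => i j; rewrite mxE.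
have h1 := psumr_eq0P (fun i _ => sumr_ge0 _ (fun j _ => mul_self_ge0 (A i j))) h.
have h2 := psumr_eq0P (fun j _ => mul_self_ge0 (A i j)) (h1 i isT).
by apply/eqP; have := h2 j isT; move/eqP; rewrite mulf_eq0 orbb.
Qed.

Lemma frob_eq0 m k (A : 'M[R]_(m,k)) : frob A = 0 -> A = 0.
Proof. by move=> h; apply: frob_inner_eq0; rewrite -frob_sq h expr0n. Qed.

Lemma frob0 m k : frob (0 : 'M[R]_(m,k)) = 0.
Proof. by rewrite /frob frob_inner0l sqrtr0. Qed.

Lemma frob_CS m k (A B : 'M[R]_(m,k)) : frob_inner A B <= frob A * frob B.
Proof.
have [a0|a0] := eqVneq (frob A) 0.
  by rewrite (frob_eq0 a0) frob_inner0l frob0 mul0r.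
have [b0|b0] := eqVneq (frob B) 0.
  by rewrite (frob_eq0 b0) frob_innerC frob_inner0l frob0 mulr0.
have ha : 0 < frob A by rewrite lt0r a0 frob_ge0.
have hb : 0 < frob B by rewrite lt0r b0 frob_ge0.
set u := frob B / frob A.
have := frob_inner_ge0 (u *: A - B).
rewrite frob_innerDl frob_innerDr frob_innerDr !frob_innerNl !frob_innerNr
  !frob_innerZl !frob_innerZr opprK (frob_innerC B A) -!frob_sq.
have hu : u * frob A = frob B by rewrite /u divfK.
have e : u * (u * frob A ^+ 2) = frob B ^+ 2.
  by rewrite -hu; ring.
rewrite e => H.
have hu0 : 0 < u by rewrite divr_gt0.
have : frob_inner A B <= frob B ^+ 2 / u.
  rewrite ler_pdivlMr //; nra.
suff -> : frob B ^+ 2 / u = frob A * frob B by [].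
rewrite /u; field; by rewrite a0 b0.
Qed.


Lemma frob_le m k (A : 'M[R]_(m,k)) c : 0 <= c -> frob_inner A A <= c ^+ 2 -> frob A <= c.
Proof.
move=> c0 h; rewrite /frob -(ger0_norm c0) -sqrtr_sqr ler_sqrt //; exact: sqr_ge0.
Qed.

Lemma frob_inner_tr m k (A B : 'M[R]_(m,k)) : frob_inner A B = \tr (A^T *m B).
Proof.
rewrite /mxtrace /frob_inner exchange_big; apply: eq_bigr => j _.
by rewrite mxE; apply: eq_bigr => i _; rewrite mxE.
Qed.

Lemma frob_trmx m k (A : 'M[R]_(m,k)) : frob A^T = frob A.
Proof.
rewrite /frob /frob_inner exchange_big; congr Num.sqrt.
by apply: eq_bigr => j _; apply: eq_bigr => i _; rewrite !mxE.
Qed.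

Lemma frob_orthL m k l (U : 'M[R]_(m,k)) (M : 'M[R]_(k,l)) :
  U^T *m U = 1%:M -> frob (U *m M) = frob M.
Proof.
move=> hU; rewrite /frob !frob_inner_tr trmx_mul -mulmxA (mulmxA U^T) hU mul1mx.
by [].
Qed.

Lemma frob_orthR m k (V : 'M[R]_k) (M : 'M[R]_(m,k)) :
  V^T *m V = 1%:M -> frob (M *m V^T) = frob M.
Proof.
move=> hV; rewrite -frob_trmx trmx_mul trmxK frob_orthL // frob_trmx //.
Qed.

Lemma frobD m k (A B : 'M[R]_(m,k)) : frob (A + B) <= frob A + frob B.
Proof.
apply: frob_le; first by rewrite addr_ge0 // frob_ge0.
rewrite frob_innerDl !frob_innerDr (frob_innerC B A) -!frob_sq.
have := frob_CS A B; nra.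
Qed.

Lemma frobN m k (A : 'M[R]_(m,k)) : frob (- A) = frob A.
Proof. by rewrite /frob frob_innerNl frob_innerNr opprK. Qed.

Lemma frobZ m k a (A : 'M[R]_(m,k)) : frob (a *: A) = `|a| * frob A.
Proof.
by rewrite /frob frob_innerZl frob_innerZr mulrA -expr2 sqrtrM ?sqr_ge0 // sqrtr_sqr.
Qed.

Lemma frob_CS_abs m k (A B : 'M[R]_(m,k)) : `|frob_inner A B| <= frob A * frob B.
Proof.
have [h|h] := ler0P (frob_inner A B).
  by rewrite -frobN -frob_innerNl frob_CS.
by rewrite frob_CS.
Qed.

Lemma entry_le_frob m k (A : 'M[R]_(m,k)) i j : `|A i j| <= frob A.
Proof.
rewrite -(sqrtr_sqr (A i j)) ler_sqrt ?frob_inner_ge0 // /frob_inner.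
rewrite (bigD1 i) //= (bigD1 j) //= expr2 -addrA lerDl addr_ge0 //.
  by apply: sumr_ge0 => j' _; exact: mul_self_ge0.
by apply: sumr_ge0 => i' _; apply: sumr_ge0 => j' _; exact: mul_self_ge0.
Qed.

Lemma frob_mul m k l (A : 'M[R]_(m,k)) (B : 'M[R]_(k,l)) :
  frob (A *m B) <= frob A * frob B.
Proof.
apply: frob_le; first by rewrite mulr_ge0 // frob_ge0.
have hA : frob A ^+ 2 = \sum_(i < m) frob (row i A) ^+ 2.
  rewrite frob_sq; apply: eq_bigr => i _; rewrite frob_sq /frob_inner big_ord1.
  by apply: eq_bigr => l' _; rewrite !mxE.
have hB : frob B ^+ 2 = \sum_(j < l) frob (col j B)^T ^+ 2.
  rewrite -frob_trmx frob_sq; apply: eq_bigr => i _; rewrite frob_sq /frob_inner big_ord1.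
  by apply: eq_bigr => l' _; rewrite !mxE.
rewrite exprMn hA hB mulr_suml; apply: ler_sum => i _.
rewrite mulr_sumr; apply: ler_sum => j _.
have e : (A *m B) i j = frob_inner (row i A) (trmx (col j B)).
  by rewrite mxE /frob_inner big_ord1; apply: eq_bigr => l' _; rewrite !mxE.
rewrite e -expr2 -exprMn.
rewrite -real_normK ?num_real //.
rewrite ler_sqr ?nnegrE ?mulr_ge0 ?frob_ge0 //; exact: frob_CS_abs.
Qed.


Section SVD.
Variables (n p : nat) (U : 'M[R]_(n,p)) (V : 'M[R]_p).
Hypothesis hU : U^T *m U = 1%:M.
Hypothesis hV : V^T *m V = 1%:M.

Lemma hVt : V *m V^T = 1%:M.
Proof. exact: mulmx1C. Qed.

Definition gcub (x : R) : R := x * (3 / 2 - 1 / 2 * x ^+ 2).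

Lemma XtX0 (d : 'rV[R]_p) :
  (U *m diag_mx d *m V^T)^T *m (U *m diag_mx d *m V^T) =
  V *m (diag_mx d *m diag_mx d) *m V^T.
Proof.
rewrite !trmx_mul trmxK tr_diag_mx !mulmxA.
by rewrite -(mulmxA (V *m diag_mx d) U^T U) hU mulmx1.
Qed.

Lemma XtX (d : 'rV[R]_p) :
  (U *m diag_mx d *m V^T)^T *m (U *m diag_mx d *m V^T) - 1%:M =
  V *m diag_mx (\row_i (d 0 i ^+ 2 - 1)) *m V^T.
Proof.
rewrite XtX0.
have -> : diag_mx (\row_i (d 0 i ^+ 2 - 1)) = diag_mx d *m diag_mx d - 1%:M.
  rewrite mulmx_diag; apply/matrixP => i j; rewrite !mxE.
  by case: eqP => _; rewrite ?mulr1n ?mulr0n ?subr0 ?expr2.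
by rewrite mulmxBr mulmxBl mulmx1 hVt.
Qed.

Lemma XA (d : 'rV[R]_p) :
  (U *m diag_mx d *m V^T) *m calA (U *m diag_mx d *m V^T) =
  U *m diag_mx (\row_i gcub (d 0 i)) *m V^T.
Proof.
rewrite /calA XtX0 mulmxBr mul_mx_scalar -scalemxAr.
have -> : U *m diag_mx d *m V^T *m (V *m (diag_mx d *m diag_mx d) *m V^T) =
   U *m (diag_mx d *m (diag_mx d *m diag_mx d)) *m V^T.
  rewrite !mulmxA -(mulmxA (U *m diag_mx d) V^T V) hV mulmx1.
  by [].
have E : diag_mx (\row_i gcub (d 0 i)) =
   (3/2 : R) *: diag_mx d - (1/2 : R) *: (diag_mx d *m (diag_mx d *m diag_mx d)).
  rewrite !mulmx_diag; apply/matrixP => i j; rewrite !mxE /gcub.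
  by case: eqP => _; rewrite ?mulr1n ?mulr0n ?subr0 ?mulr0 //; ring.
rewrite E.
by rewrite mulmxBr mulmxBl -!scalemxAr -!scalemxAl.
Qed.

End SVD.
End Frob.


Section Bound.
Variable R : realType.

Lemma rV_entry_le k (v : 'rV[R]_k) i : `|v ord0 i| <= `|v|.
Proof.
rewrite [leRHS]/Num.Def.normr /= mx_normrE.
apply: le_trans; last exact: (le_bigmax _ _ (ord0, i)).
by [].
Qed.

Lemma frob_le_entries m k (A : 'M[R]_(m,k)) (c : R) : 0 <= c ->
  (forall i j, `|A i j| <= c) -> frob A <= ((m * k)%:R + 1) * c.
Proof.
move=> c0 h; apply: frob_le; first by rewrite mulr_ge0 // addr_ge0.
apply: (@le_trans _ _ (\sum_(i < m) \sum_(j < k) c ^+ 2)).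
  apply: ler_sum => i _; apply: ler_sum => j _.
  by rewrite -expr2 -real_normK ?num_real // ler_sqr ?nnegrE.
rewrite !sumr_const !card_ord -mulrnA -mulr_natr mulnC.
have h0 : 0 <= ((m * k)%:R : R) by [].
have hc := sqr_ge0 c.
nra.
Qed.

End Bound.

Section Cont.
Variable R : realType.

Lemma tele (V : zmodType) (a b c d : V) : a - b + (b - c) + (c - d) = a - d.
Proof. by rewrite !addrA !subrK. Qed.

Lemma sub4 (V : zmodType) (a b c d : V) : (a - b) - (c - d) = (a - c) - (b - d).
Proof. by rewrite !opprB addrACA [RHS]addrACA [X in _ + X = _]addrC. Qed.

Lemma frob_dist m k (A B : 'M[R]_(m,k)) : `|frob A - frob B| <= frob (A - B).
Proof.
rewrite ler_norml; apply/andP; split.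
  have := frobD (B - A) A; rewrite subrK -opprB frobN; lra.
have := frobD (A - B) B; rewrite subrK; lra.
Qed.

Lemma Zmap_expand m k (X : 'M[R]_(m,k)) :
  X *m calA X = (3/2 : R) *: X - (1/2 : R) *: (X *m (X^T *m X)).
Proof. by rewrite /calA mulmxBr mul_mx_scalar -scalemxAr. Qed.

Lemma Zmap_lip m k (X0 Y : 'M[R]_(m,k)) : frob (Y - X0) <= 1 ->
  frob (Y *m calA Y - X0 *m calA X0) <=
    (3/2 + 3/2 * (frob X0 + 1) ^+ 2) * frob (Y - X0).
Proof.
move=> h1; set D := Y - X0.
have eT : Y *m (Y^T *m Y) - X0 *m (X0^T *m X0) =
   D *m (Y^T *m Y) + X0 *m (D^T *m Y) + X0 *m (X0^T *m D).
  rewrite /D mulmxBl linearB /= mulmxBl mulmxBr mulmxBr mulmxBr.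
  by rewrite tele.
have eZ : Y *m calA Y - X0 *m calA X0 =
   (3/2 : R) *: D - (1/2 : R) *: (Y *m (Y^T *m Y) - X0 *m (X0^T *m X0)).
  by rewrite !Zmap_expand /D !scalerBr sub4.
rewrite eZ eT.
set a := frob X0; set b := frob Y; set d := frob D.
have a0 : 0 <= a by exact: frob_ge0.
have d0 : 0 <= d by exact: frob_ge0.
have hb : b <= a + d.
  by rewrite /b /a /d -{1}(subrK X0 Y) addrC frobD.
have b0 : 0 <= b by exact: frob_ge0.
have h2 : frob (D *m (Y^T *m Y) + X0 *m (D^T *m Y) + X0 *m (X0^T *m D)) <=
   d * (b * b) + a * (d * b) + a * (a * d).
  apply: le_trans; first exact: frobD.
  apply: lerD; last first.
    apply: le_trans; first exact: frob_mul.
    apply: ler_wpM2l => //; apply: le_trans; first exact: frob_mul.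
    by rewrite frob_trmx.
  apply: le_trans; first exact: frobD.
  apply: lerD.
    apply: le_trans; first exact: frob_mul.
    apply: ler_wpM2l => //; apply: le_trans; first exact: frob_mul.
    by rewrite frob_trmx.
  apply: le_trans; first exact: frob_mul.
  apply: ler_wpM2l => //; apply: le_trans; first exact: frob_mul.
  by rewrite frob_trmx.
apply: le_trans; first exact: frobD.
rewrite frobN !frobZ !ger0_norm //.
have hd1 : d <= 1 := h1.
rewrite -/d.
have hb1 : b <= a + 1 by lra.
have : d * (b * b) + a * (d * b) + a * (a * d) <= 3 * (a + 1) ^+ 2 * d.
  have hbb : b * b <= (a + 1) ^+ 2 by rewrite expr2; nra.
  have hab : a * b <= (a + 1) ^+ 2 by rewrite expr2; nra.
  have haa : a * a <= (a + 1) ^+ 2 by rewrite expr2; nra.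
  nra.
move=> h3; nra.
Qed.


Lemma vec_mx_dist k1 k2 (v w : 'rV[R]_(k1 * k2)) :
  frob (vec_mx w - vec_mx v) <= ((k1 * k2)%:R + 1) * `|v - w|.
Proof.
apply: frob_le_entries => // i j.
have := rV_entry_le (w - v) (mxvec_index i j).
rewrite distrC; apply: le_trans; rewrite !mxE //.
Qed.

Lemma F_cont n p (grad : 'M[R]_(n,p) -> 'M[R]_(n,p)) : locally_lipschitz grad ->
  continuous (fun v : 'rV[R]_(n * p) => frob (Gfun grad (vec_mx v))).
Proof.
move=> hgL v; apply/(cvgrPdist_lt (FF := nbhs_filter v)) => eps eps0.
set X0 := vec_mx v.
have [r [L [r0 hL]]] := hgL (X0 *m calA X0).
set a := frob X0.
have a0 : 0 <= a by exact: frob_ge0.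
set K := 3/2 + 3/2 * (a + 1) ^+ 2.
have K0 : 0 <= K by rewrite /K; have := sqr_ge0 (a + 1); lra.
set N : R := (n * p)%:R + 1.
have N1 : 1 <= N by rewrite /N lerDr.
set T := (`|L| + 1) * (K + 1) * N.
have L0 : 0 <= `|L| by [].
have T0 : 0 < T by rewrite /T !mulr_gt0 //; lra.
set mu := Num.min (Num.min 1 r) eps.
have mu0 : 0 < mu by rewrite /mu !lt_min ltr01 r0 eps0.
have mu1 : mu <= 1 by rewrite /mu !ge_min lexx.
have mur : mu <= r by rewrite /mu !ge_min lexx orbT.
have mue : mu <= eps by rewrite /mu ge_min lexx orbT.
set dl := mu / (2 * T).
have dl0 : 0 < dl by rewrite /dl divr_gt0 // mulr_gt0.
have Tdl : T * dl = mu / 2.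
  by rewrite /dl; field; rewrite gt_eqF.
apply/nbhs_ballP; exists dl => // w; rewrite mx_norm_ball /ball_ => hw.
have hw' : `|v - w| < dl by exact: hw.
set t := `|v - w|.
have t0 : 0 <= t by exact: normr_ge0.
have hD := vec_mx_dist v w.
rewrite -/X0 -/N -/t in hD.
have hTt : T * t <= mu / 2 by rewrite -Tdl ler_wpM2l // ?ltW // ltW.
have hNT : N * t <= T * t.
  apply: ler_wpM2r => //.
  have hLK1 : 1 <= (`|L| + 1) * (K + 1) by nra.
  rewrite /T; nra.
have hD1 : frob (vec_mx w - X0) <= 1 by lra.
have hZ := Zmap_lip hD1.
rewrite -/a -/K in hZ.
have eTt : T * t = ((`|L| + 1) * (K + 1)) * (N * t) by rewrite /T; ring.
have hP : 0 <= N * t by rewrite mulr_ge0 //; lra.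
have hKNT : K * (N * t) <= T * t.
  rewrite eTt; apply: ler_wpM2r => //; nra.
have hZ2 : frob (vec_mx w *m calA (vec_mx w) - X0 *m calA X0) <= mu / 2.
  apply: le_trans; first exact: hZ.
  apply: le_trans; last exact: hTt.
  apply: le_trans; last exact: hKNT.
  by apply: ler_wpM2l.
have hl := hL (X0 *m calA X0) (vec_mx w *m calA (vec_mx w)).
rewrite subrr frob0 in hl.
have := hl r0 ltac:(lra).
move=> hl2.
rewrite /Gfun -/X0.
apply: le_lt_trans; first exact: frob_dist.
apply: le_lt_trans; first exact: hl2.
rewrite -frobN opprB.
have hLK : `|L| * (K * (N * t)) <= T * t.
  rewrite eTt mulrA; apply: ler_wpM2r => //; nra.
have hf0 := frob_ge0 (vec_mx w *m calA (vec_mx w) - X0 *m calA X0).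
apply: (@le_lt_trans _ _ (`|L| * frob (vec_mx w *m calA (vec_mx w) - X0 *m calA X0))).
  by apply: ler_wpM2r => //; exact: ler_norm.
apply: (@le_lt_trans _ _ (`|L| * (K * (N * t)))).
  apply: ler_wpM2l => //; apply: le_trans; first exact: hZ.
  by apply: ler_wpM2l.
lra.
Qed.

End Cont.

Section Bnd.
Variable R : realType.

Lemma G_bounded n p (grad : 'M[R]_(n,p) -> 'M[R]_(n,p)) (c : R) :
  locally_lipschitz grad ->
  exists M, forall X : 'M[R]_(n,p), (forall i j, `|X i j| <= c) ->
    frob (Gfun grad X) <= M.
Proof.
move=> hgL.
set K := [set v : 'rV[R]_(n * p) | forall i, `[(- c), c]%classic (v ord0 i)].
have Kc : compact K.
  by apply: (@rV_compact _ _ (fun=> `[(- c), c]%classic)) => _; exact: segment_compact.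
have := continuous_compact (continuous_subspaceT (F_cont hgL)) Kc.
move/compact_bounded => [M [_ hM]].
exists (M + 1) => X hX.
have hK : K (mxvec X).
  move=> k; case/mxvec_indexP: k => i j.
  have := hX i j; rewrite /= in_itv /= ler_norml => /andP[h1 h2].
  by rewrite mxvecE h1 h2.
have := hM (M + 1) ltac:(lra) (frob (Gfun grad (vec_mx (mxvec X)))).
rewrite mxvecK => h.
have := h ltac:(by exists (mxvec X); rewrite // mxvecK).
move=> h2; apply: le_trans h2; exact: ler_norm.
Qed.

End Bnd.

Section Spec.
Variable R : realType.

Lemma spec_ub m k (X : 'M[R]_(m,k)) :
  has_ubound [set frob (X *m v) | v in [set v : 'cV[R]_k | frob v <= 1]].
Proof.
exists (frob X) => _ [v hv <-].
apply: le_trans; first exact: frob_mul.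
rewrite -[leRHS]mulr1; apply: ler_wpM2l => //; exact: frob_ge0.
Qed.

Lemma frob_delta k (j : 'I_k) : frob (delta_mx j ord0 : 'cV[R]_k) <= 1.
Proof.
apply: frob_le => //; rewrite expr1n /frob_inner (bigD1 j) //= big_ord1 !mxE !eqxx /=.
rewrite mulr1 big1 ?addr0 // => i hi.
by rewrite big_ord1 !mxE (negbTE hi) mulr0.
Qed.

Lemma entry_le_spec m k (X : 'M[R]_(m,k)) i j : `|X i j| <= spec_norm X.
Proof.
pose e : 'cV[R]_k := delta_mx j ord0.
apply: (@le_trans _ _ (frob (X *m e))).
  have := entry_le_frob (X *m e) i ord0.
  suff -> : (X *m e) i ord0 = X i j by [].
  rewrite mxE (bigD1 j) //= !mxE !eqxx mulr1 big1 ?addr0 // => k' hk.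
  by rewrite !mxE (negbTE hk) mulr0.
apply: (ub_le_sup (spec_ub X)).
by exists e => //; exact: frob_delta.
Qed.

Lemma spec_le m k (X : 'M[R]_(m,k)) c :
  (forall v : 'cV[R]_k, frob v <= 1 -> frob (X *m v) <= c) -> spec_norm X <= c.
Proof.
move=> h.
have ne : [set frob (X *m v) | v in [set v : 'cV[R]_k | frob v <= 1]] !=set0.
  exists (frob (X *m (0 : 'cV[R]_k))); exists (0 : 'cV[R]_k) => //=.
  by rewrite /frob /frob_inner big1 ?sqrtr0 ?ler01 // => i _; rewrite big1 // => j _; rewrite mxE mul0r.
apply: (ge_sup ne).
by move=> _ [v hv <-]; exact: h.
Qed.

End Spec.

Section MV.
Variable R : realType.

Lemma mvt_f n p (f : 'M[R]_(n,p) -> R) grad (hgrad : is_gradient f grad)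
  (Z D : 'M[R]_(n,p)) :
  exists2 t, 0 < t < 1 & f (Z + D) - f Z = frob_inner (grad (Z + t *: D)) D.
Proof.
pose phi := fun t : R => f (Z + t *: D).
have e : forall t : R, (fun h : R => h^-1 *: ((phi \o shift t) (h *: 1) - phi t)) =
   (fun h : R => h^-1 *: ((f \o shift (Z + t *: D)) (h *: D) - f (Z + t *: D))).
  move=> t; apply: funext => h /=.
  by rewrite /phi [_%:A]mulr1 scalerDl addrCA.
have hd : forall t, derivable phi t 1.
  move=> t; rewrite /derivable e -/(derivable f (Z + t *: D) D).
  exact: diff_derivable (proj1 (hgrad _)).

have hD : forall t, 'D_1 phi t = frob_inner (grad (Z + t *: D)) D.
  move=> t; rewrite /derive e -/(derive f (Z + t *: D) D).
  rewrite deriveE; last exact: (proj1 (hgrad _)).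
  exact: (proj2 (hgrad _)).
have := @MVT R phi (fun t => frob_inner (grad (Z + t *: D)) D) 0 1 ltr01.
case.
- by move=> x _; apply: DeriveDef; [exact: hd | exact: hD].
- exact: derivable_within_continuous.
move=> t ht; rewrite /phi scale1r scale0r addr0 subr0 mulr1 => ->.
by exists t => //; move: ht; rewrite in_itv.
Qed.

End MV.

Section Scal.
Variable R : realType.

Lemma gcub_cont : continuous (@gcub R).
Proof.
move=> x; rewrite /gcub.
apply: cvgM; first exact: cvg_id.
apply: cvgB; first exact: cvg_cst.
apply: cvgM; first exact: cvg_cst.
rewrite expr2; apply: cvgM; exact: cvg_id.
Qed.

Lemma gcub_ivt (y : R) : 0 <= y <= 1 -> exists x, 0 <= x <= 1 /\ gcub x = y.
Proof.
move=> hy.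
have := @IVT R (@gcub R) 0 1 y ler01 (continuous_subspaceT gcub_cont).
have g0 : gcub (0:R) = 0 by rewrite /gcub mul0r.
have g1 : gcub (1:R) = 1 by rewrite /gcub; field.
rewrite g0 g1 /= => hI.
have hy2 : Num.min (0:R) 1 <= y <= Num.max (0:R) 1.
  by rewrite (min_l ler01) (max_r ler01).
have [x hx <-] := hI hy2.
by exists x; split => //; move: hx; rewrite in_itv.
Qed.

Lemma scal_ineq (s : R) : 0 <= s -> `|s ^+ 2 - 1| <= 1/6 ->
  [/\ 0 <= gcub s, 0 <= 1 - gcub s & 1 - gcub s <= (s ^+ 2 - 1) ^+ 2 / 2].
Proof.
move=> s0; rewrite ler_norml => /andP[h1 h2].
have hs1 : s <= 2 by nra.
have hs2 : 9/10 <= s by nra.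
rewrite /gcub; split.
- nra.
- have : 1 - s * (3 / 2 - 1 / 2 * s ^+ 2) = (s - 1) ^+ 2 * (s + 2) / 2 by field.
  move=> ->; apply: divr_ge0 => //; apply: mulr_ge0; [exact: sqr_ge0 | lra].
- have : (s ^+ 2 - 1) ^+ 2 / 2 - (1 - s * (3 / 2 - 1 / 2 * s ^+ 2)) =
     (s - 1) ^+ 2 * (s ^+ 2 + s - 1) / 2 by field.
  rewrite -subr_ge0 => ->; apply: divr_ge0 => //; apply: mulr_ge0; first exact: sqr_ge0.
  nra.
Qed.

End Scal.

Section Diag.
Variable R : realType.

Lemma diag_entry k (d : 'rV[R]_k) i : diag_mx d i i = d 0 i.
Proof. by rewrite mxE eqxx mulr1n. Qed.

Lemma frob_inner_diag k (d : 'rV[R]_k) :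
  frob_inner (diag_mx d) (diag_mx d) = \sum_i d 0 i ^+ 2.
Proof.
apply: eq_bigr => i _; rewrite (bigD1 i) //= big1 ?addr0.
  by rewrite diag_entry expr2.
by move=> j hj; rewrite !mxE eq_sym (negbTE hj) mulr0n mulr0.
Qed.

Lemma frob_diag_mul k l (e : 'rV[R]_k) (x : 'M[R]_(k,l)) :
  (forall i, `|e 0 i| <= 1) -> frob (diag_mx e *m x) <= frob x.
Proof.
move=> he; apply: frob_le; first exact: frob_ge0.
rewrite frob_sq mul_diag_mx; apply: ler_sum => i _; apply: ler_sum => j _.
rewrite !mxE -!expr2 exprMn.
have : e 0 i ^+ 2 <= 1.
  by rewrite -real_normK ?num_real // -(expr1n _ 2) ler_sqr ?nnegrE.
have := sqr_ge0 (x i j); nra.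
Qed.

Lemma sum_sq_le k (b : 'I_k -> R) : (forall i, 0 <= b i) ->
  \sum_i b i ^+ 2 <= (\sum_i b i) ^+ 2.
Proof.
move=> hb; rewrite [in leRHS]expr2 mulr_suml; apply: ler_sum => i _.
rewrite expr2; apply: ler_wpM2l => //.
rewrite (bigD1 i) //= lerDl; exact: sumr_ge0.
Qed.

End Diag.

Unset Implicit Arguments. Set Strict Implicit.

Theorem mainTheorem15 (R : realType) (n p : nat) (hnp : (p <= n)%N)
  (f : 'M[R]_(n, p) -> R) (grad : 'M[R]_(n, p) -> 'M[R]_(n, p))
  (hgrad : is_gradient f grad)
  (hfL : locally_lipschitz_fun f) (hgL : locally_lipschitz grad)
  (beta : R) (hbeta : 0 < beta)
  (X : 'M[R]_(n, p)) (hX : X \in @Omega_bar R n p (1 / 6))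
  (U : 'M[R]_(n, p)) (S : 'M[R]_p) (V : 'M[R]_p)
  (hsvd : is_econ_svd X U S V) :
  hfun f beta (U *m V^T) <=
    hfun f beta X - (beta / 4 - M1 grad / 2) * frob (X^T *m X - 1%:M) ^+ 2.
Proof.
move: hsvd => [hX0 hU hV hoff hnn].
pose s : 'rV[R]_p := \row_i S i i.
have hS : S = diag_mx s.
  apply/matrixP => i j; rewrite !mxE.
  have [->|ne] := eqVneq i j; first by rewrite ?eqxx ?mulr1n.
  by rewrite mulr0n hoff.
rewrite hS in hX0.
have hVV := hVt hV.
have hq : frob (X^T *m X - 1%:M) = frob (diag_mx (\row_i (s 0 i ^+ 2 - 1))).
  by rewrite hX0 (XtX hU hV) frob_orthR // frob_orthL.
set q := frob (X^T *m X - 1%:M).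
have hq6 : q <= 1/6 by move: hX; rewrite inE.
have hq0 : 0 <= q by exact: frob_ge0.
have hsi : forall i, 0 <= s 0 i /\ `|s 0 i ^+ 2 - 1| <= 1/6.
  move=> i; split; first by rewrite mxE hnn.
  apply: le_trans hq6; rewrite /q hq.
  have := entry_le_frob (diag_mx (\row_i (s 0 i ^+ 2 - 1))) i i.
  by rewrite diag_entry mxE.
have hYY : (U *m V^T)^T *m (U *m V^T) = 1%:M.
  by rewrite trmx_mul trmxK !mulmxA -(mulmxA V) hU mulmx1 hVV.
have hYA : (U *m V^T) *m calA (U *m V^T) = U *m V^T.
  rewrite /calA hYY -[((3/2 : R)%:M)]scalemx1 -scalerBl.
  have -> : (3/2 - 1/2 : R) = 1 by field.
  by rewrite scale1r mulmx1.
have hZ : X *m calA X = U *m diag_mx (\row_i gcub (s 0 i)) *m V^T.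
  by rewrite hX0 (XA hU hV).
pose Dm := U *m diag_mx (\row_i (1 - gcub (s 0 i))) *m V^T.
have hZD : X *m calA X + Dm = U *m V^T.
  rewrite hZ /Dm -mulmxDl -mulmxDr.
  have -> : diag_mx (\row_i gcub (s 0 i)) + diag_mx (\row_i (1 - gcub (s 0 i))) = 1%:M.
    apply/matrixP => i j; rewrite !mxE.
    by case: (i == j); rewrite ?mulr1n ?mulr0n ?addr0 // addrC subrK.
  by rewrite mulmx1.
have [t ht hmv] := mvt_f hgrad (X *m calA X) Dm.
rewrite hZD in hmv.
have hxi : X *m calA X + t *: Dm =
    U *m diag_mx (\row_i (gcub (s 0 i) + t * (1 - gcub (s 0 i)))) *m V^T.
  rewrite hZ /Dm scalemxAl scalemxAr -mulmxDl -mulmxDr.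
  congr (_ *m _ *m _); apply/matrixP => i j; rewrite !mxE.
  by case: (i == j); rewrite ?mulr1n ?mulr0n ?mulr0 ?addr0.
have he : forall i : 'I_p, exists x : R, 0 <= x <= 1 /\
    gcub x = gcub (s 0 i) + t * (1 - gcub (s 0 i)).
  move=> i; apply: gcub_ivt.
  have [hi1 hi2] := hsi i; have [g0 g1 g2] := scal_ineq hi1 hi2.
  move: ht => /andP[t0 t1].
  apply/andP; split; nra.
have [e he'] := boolp.choice he.
pose er : 'rV[R]_p := \row_i e i.
pose W := U *m diag_mx er *m V^T.
have hW : W *m calA W = X *m calA X + t *: Dm.
  rewrite /W (XA hU hV) hxi.
  congr (_ *m diag_mx _ *m _); apply/rowP => i; rewrite !mxE.
  by case: (he' i) => _ ->; rewrite mxE.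
have hWO : @Omega R n p W.
  rewrite /Omega /=; apply: spec_le => v hv.
  rewrite /W -!mulmxA frob_orthL //.
  have h1 : frob (diag_mx er *m (V^T *m v)) <= frob (V^T *m v).
    apply: frob_diag_mul => k; rewrite mxE; case: (he' k) => /andP[h1 h2] _.
    by rewrite ger0_norm.
  apply: le_trans h1 _.
  rewrite frob_orthL; last by rewrite trmxK hVV.
  lra.
have [M hM] := G_bounded (1 + 1/12) hgL.
have hub : has_ubound [set frob (Gfun grad X') | X' in @Omega R n p].
  exists M => _ [X' hX' <-]; apply: hM => i j.
  apply: le_trans (entry_le_spec X' i j) _; exact: hX'.
have hGM : frob (Gfun grad W) <= M1 grad.
  by apply: (ub_le_sup hub); exists W.
rewrite /Gfun hW in hGM.
have hDm : frob Dm <= q ^+ 2 / 2.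
  rewrite /Dm frob_orthR // frob_orthL //.
  apply: frob_le; first by apply: divr_ge0 => //; exact: sqr_ge0.
  rewrite frob_inner_diag.
  have hq2 : q ^+ 2 = \sum_i (s 0 i ^+ 2 - 1) ^+ 2.
    by rewrite /q hq frob_sq frob_inner_diag; apply: eq_bigr => i _; rewrite mxE.
  apply: (@le_trans _ _ (\sum_i ((s 0 i ^+ 2 - 1) ^+ 2 / 2) ^+ 2)).
    apply: ler_sum => i _; rewrite mxE.
    have [hi1 hi2] := hsi i; have [g0 g1 g2] := scal_ineq hi1 hi2.
    by rewrite ler_sqr ?nnegrE // divr_ge0 // sqr_ge0.
  apply: le_trans; first apply: sum_sq_le.
    by move=> i; rewrite divr_ge0 // sqr_ge0.
  by rewrite -mulr_suml -hq2.
have hCS := frob_CS (grad (X *m calA X + t *: Dm)) Dm.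
have hG0 := frob_ge0 (grad (X *m calA X + t *: Dm)).
have hD0 := frob_ge0 Dm.
rewrite /hfun hYA hYY subrr frob0 expr0n /= mulr0 addr0 -/q.
nra.
Qed.
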